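(* Let $X=[x_{ij}]\in\mathbb{R}^{N_1\times N_2}$ be $k$-sparse. For $i\in\{1,2\}$ let $U_i\in\mathbb{R}^{m_i\times N_i}$ satisfy the NSP$_k$ property. Define $Y=U_1XU_2^T\in\mathbb{R}^{m_1\times m_2}$ and let $y_1,\dots,y_{m_2}\in\mathbb{R}^{m_1}$ be the columns of $Y$. For $i\in[m_2]$ consider $$\hat z_i=\arg\min_{z\in\mathbb{R}^{N_1}}\|z\|_1\quad\text{s.t.}\quad y_i=U_1z .$$ Then each of these problems has a unique solution $\hat z_i$, and $\hat z_i$ is $k$-sparse; moreover, the matrix $Z\in\mathbb{R}^{N_1\times m_2}$ with columns $\hat z_1,\dots,\hat z_{m_2}$ equals $XU_2^T$. Let $w_1^T,\dots,w_{N_1}^T$ be the rows of $Z$ (so $w_j\in\mathbb{R}^{m_2}$). Then for each $j\in[N_1]$ the problem $$\hat v_j=\arg\min_{v\in\mathbb{R}^{N_2}}\|v\|_1\quad\text{s.t.}\quad w_j=U_2v$$ has a unique solution, and $\hat v_j^T$ is the $j$-th row of $X$. In particular $X$ is uniquely recovered from $Y$.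
   Context: A vector or matrix is $k$-sparse if it has at most $k$ nonzero entries. For a positive integer $n$, $[n]=\{1,\dots,n\}$. For $w\in\mathbb{R}^N$ and $S\subset[N]$, $\|w_S\|_1=\sum_{i\in S}|w_i|$ and $S^c=[N]\setminus S$. A matrix $A\in\mathbb{R}^{m\times N}$ satisfies the null space property of order $k$ (NSP$_k$) if for every $w\neq 0$ with $Aw=0$ and every $S\subset[N]$ with $|S|=k$ one has $\|w_S\|_1<\|w_{S^c}\|_1$. *)

(* Defs.v *)
From HB Require Import structures.
From mathcomp Require Import all_boot all_order all_algebra.
Set Implicit Arguments. Unset Strict Implicit. Unset Printing Implicit Defensive.
Import Order.TTheory GRing.Theory Num.Theory.
Local Open Scope ring_scope.

Definition sparse (R : numDomainType) (m n : nat) (k : nat) (A : 'M[R]_(m, n)) : Prop :=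
  (#|[set ij : 'I_m * 'I_n | A ij.1 ij.2 != 0%R]| <= k)%N.

Definition l1norm (R : numDomainType) (n : nat) (v : 'cV[R]_n) : R :=
  \sum_(i < n) `|v i 0|.

Definition l1norm_on (R : numDomainType) (n : nat) (S : {set 'I_n}) (v : 'cV[R]_n) : R :=
  \sum_(i in S) `|v i 0|.

Definition NSP (R : numDomainType) (m N : nat) (k : nat) (A : 'M[R]_(m, N)) : Prop :=
  forall w : 'cV[R]_N, w != 0 -> A *m w = 0 ->
  forall S : {set 'I_N}, #|S| = k -> l1norm_on S w < l1norm_on (~: S) w.

Definition l1_argmin (R : numDomainType) (m N : nat) (A : 'M[R]_(m, N))
  (y : 'cV[R]_m) (z : 'cV[R]_N) : Prop :=
  y = A *m z /\ forall z' : 'cV[R]_N, y = A *m z' -> l1norm z <= l1norm z'.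

(* Main.v *)
Require Import Defs.
From HB Require Import structures.
From mathcomp Require Import all_boot all_order all_algebra.
From mathcomp Require Import zify lra.
Import Order.TTheory GRing.Theory Num.Theory.
Local Open Scope ring_scope.

Section Aux.
Set Implicit Arguments.
Context {R : realFieldType}.

Lemma sparse_map (m n p q k : nat) (M : 'M[R]_(m, n)) (M' : 'M[R]_(p, q))
  (f : 'I_m * 'I_n -> 'I_p * 'I_q) :
  sparse k M ->
  (forall ab : 'I_p * 'I_q, M' ab.1 ab.2 != 0 ->
     exists ij, M ij.1 ij.2 != 0 /\ ab = f ij) -> sparse k M'.
Proof.
rewrite /sparse => hM hf.
apply: leq_trans hM.
apply: leq_trans (leq_imset_card f _).
apply: subset_leq_card; apply/subsetP => ab; rewrite inE => /hf [ij [hij ->]].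
by apply: imset_f; rewrite inE.
Qed.

Lemma l1_sub (n : nat) (A B : {set 'I_n}) (v : 'cV[R]_n) :
  A \subset B -> l1norm_on A v <= l1norm_on B v.
Proof.
move=> sAB; rewrite /l1norm_on (big_setID (A:=B) A) /=.
rewrite setIC (setIidPl sAB) lerDl; apply: sumr_ge0 => i _; exact: normr_ge0.
Qed.


Lemma nsp_le (m N k : nat) (A : 'M[R]_(m, N)) : (k <= N)%N -> NSP k A ->
  forall w : 'cV[R]_N, w != 0 -> A *m w = 0 ->
  forall S : {set 'I_N}, (#|S| <= k)%N -> l1norm_on S w < l1norm_on (~: S) w.
Proof.
move=> hkN hA w w0 Aw S hS.
have [n hn] : exists n, (#|S| + n = k)%N by exists (k - #|S|)%N; rewrite subnKC.
elim: n S hS hn => [|n IH] S hS hn.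
  by apply: hA => //; rewrite -hn addn0.
have : (0 < #|~: S|)%N.
  have := cardsC S; rewrite card_ord => e.
  rewrite lt0n; apply/negP => /eqP e0; move: e hkN; rewrite e0 addn0 => <-.
  by rewrite -hn addnS; idtac; first [lia | (rewrite leqNgt ltnS leq_addr)].
rewrite card_gt0 => /set0Pn [x]; rewrite inE => xS.
have hx : #|x |: S| = #|S|.+1 by rewrite cardsU1 xS.
have lt : l1norm_on (x |: S) w < l1norm_on (~: (x |: S)) w.
  by apply: IH; rewrite hx; lia.
have h1 := @l1_sub _ _ _ w (subsetUr [set x] S).
apply: (le_lt_trans h1).
apply: (lt_le_trans lt); apply: l1_sub; rewrite setCS; exact: subsetUr.
Qed.

Lemma l1_split (n : nat) (S : {set 'I_n}) (F : 'I_n -> R) :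
  \sum_(i < n) F i = \sum_(i in S) F i + \sum_(i in ~: S) F i.
Proof.
rewrite (bigID (fun i => i \in S)) /=; congr (_ + _).
by apply: eq_bigl => i; rewrite inE.
Qed.

Lemma sparse_strict (m N k : nat) (A : 'M[R]_(m, N)) : (k <= N)%N -> NSP k A ->
  forall x z : 'cV[R]_N, sparse k x -> A *m z = A *m x -> z != x ->
  l1norm x < l1norm z.
Proof.
move=> hkN hA x z hx hzx nzx.
pose T := [set ij : 'I_N * 'I_1 | x ij.1 ij.2 != 0].
pose S := [set ij.1 | ij in T].
have hS : forall i, (i \in S) = (x i 0 != 0).
  move=> i; apply/imsetP/idP => [[ij] |h]; last by exists (i, 0); rewrite ?inE.
  rewrite inE; case: ij => a b /= h ->; by rewrite (ord1 b) in h.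
have cS : (#|S| <= k)%N by apply: leq_trans (leq_imset_card _ _) hx.
pose w := z - x.
have w0 : w != 0 by rewrite subr_eq0.
have Aw : A *m w = 0 by rewrite mulmxBr hzx subrr.
have := nsp_le hkN hA w0 Aw S cS.
rewrite -subr_gt0 => H; rewrite -subr_gt0.
apply: lt_le_trans H _.
rewrite /l1norm -sumrB (l1_split S) /l1norm_on.
rewrite [leLHS]addrC; apply: lerD.
  rewrite -sumrN; apply: ler_sum => i _.
  rewrite /w !mxE.
  have := ler_normB (z i 0) (z i 0 - x i 0).
  rewrite opprB addrCA subrr addr0 distrC => h.
  move: (`|z i 0|) (`|x i 0|) (`|z i 0 - x i 0|) h => a b c h1.
  lra.
apply: ler_sum => i; rewrite inE hS negbK => /eqP xi.
by rewrite /w !mxE xi subr0 normr0 subr0.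
Qed.

Lemma sparse_argmin (m N k : nat) (A : 'M[R]_(m, N)) : (k <= N)%N -> NSP k A ->
  forall x : 'cV[R]_N, sparse k x ->
  (l1_argmin A (A *m x) x /\ forall z, l1_argmin A (A *m x) z -> z = x).
Proof.
move=> hkN hA x hx; split.
  split => // z' hz'; have [->|ne] := eqVneq z' x; first by [].
  by apply: ltW; apply: (sparse_strict hkN hA hx (esym hz') ne).
move=> z [hz hm]; apply/eqP; apply/negPn/negP => ne.
have := sparse_strict hkN hA hx (esym hz) ne.
by rewrite ltNge hm.
Qed.

Lemma sparse_inj (m N k : nat) (A : 'M[R]_(m, N)) : (k <= N)%N -> NSP k A ->
  forall x z : 'cV[R]_N, sparse k x -> sparse k z -> A *m z = A *m x -> z = x.
Proof.
move=> hkN hA x z hx hz e; apply/eqP; apply/negPn/negP => ne.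
have := sparse_strict hkN hA hx e ne.
rewrite eq_sym in ne.
have := sparse_strict hkN hA hz (esym e) ne.
by move=> h1 h2; have := lt_trans h1 h2; rewrite ltxx.
Qed.

Lemma col_mulmx (m n p : nat) (A : 'M[R]_(m, n)) (B : 'M[R]_(n, p)) i :
  col i (A *m B) = A *m col i B.
Proof. by rewrite !colE mulmxA. Qed.

Lemma sparse_col (N1 N2 m2 k : nat) (X : 'M[R]_(N1, N2)) (U2 : 'M[R]_(m2, N2)) i :
  sparse k X -> sparse k (col i (X *m U2^T)).
Proof.
move=> hX; apply: (sparse_map _ (fun ij => (ij.1, 0)) hX) => -[a b] /=.
rewrite !mxE => /eqP h.
have [l hl] : exists l, X a l != 0.
  case: (pickP (fun l => X a l != 0)) => [l hl|H]; first by exists l.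
  exfalso; apply: h; apply: big1 => l _.
  by move/negbFE/eqP: (H l) ->; rewrite mul0r.
by exists (a, l); rewrite (ord1 b).
Qed.

Lemma sparse_row (N1 N2 k : nat) (X : 'M[R]_(N1, N2)) j :
  sparse k X -> sparse k (row j X)^T.
Proof.
move=> hX; apply: (sparse_map _ (fun ij => (ij.2, 0)) hX) => -[a b] /=.
rewrite !mxE => h; by exists (j, a); rewrite (ord1 b).
Qed.

Lemma row_tr (N1 N2 m2 : nat) (X : 'M[R]_(N1, N2)) (U2 : 'M[R]_(m2, N2)) j :
  (row j (X *m U2^T))^T = U2 *m (row j X)^T.
Proof. by rewrite row_mul trmx_mul trmxK. Qed.

End Aux.

Theorem mainTheorem1 (R : realFieldType) (k N1 N2 m1 m2 : nat)
  (X : 'M[R]_(N1, N2)) (U1 : 'M[R]_(m1, N1)) (U2 : 'M[R]_(m2, N2))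
  (hk1 : (k <= N1)%N) (hk2 : (k <= N2)%N)
  (hX : sparse k X) (hU1 : NSP k U1) (hU2 : NSP k U2) :
  let Y := U1 *m X *m U2^T in
  [/\ (forall i : 'I_m2, exists! z : 'cV[R]_N1, l1_argmin U1 (col i Y) z),
      (forall (i : 'I_m2) (z : 'cV[R]_N1), l1_argmin U1 (col i Y) z ->
          sparse k z /\ z = col i (X *m U2^T)),
      (forall j : 'I_N1, exists! v : 'cV[R]_N2,
          l1_argmin U2 (row j (X *m U2^T))^T v),
      (forall (j : 'I_N1) (v : 'cV[R]_N2),
          l1_argmin U2 (row j (X *m U2^T))^T v -> v^T = row j X)
    & (forall X' : 'M[R]_(N1, N2), sparse k X' -> U1 *m X' *m U2^T = Y -> X' = X)].
Proof.
move=> Y.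
have eY i : col i Y = U1 *m col i (X *m U2^T) by rewrite /Y -mulmxA col_mulmx.
have HC i := sparse_argmin hk1 hU1 (sparse_col U2 i hX).
have HR j := sparse_argmin hk2 hU2 (sparse_row j hX).
split.
- move=> i; exists (col i (X *m U2^T)); rewrite eY; split; first exact: (HC i).1.
  by move=> z hz; rewrite ((HC i).2 z hz).
- move=> i z; rewrite eY => hz; rewrite ((HC i).2 z hz); split => //.
  exact: sparse_col.
- move=> j; exists (row j X)^T; rewrite row_tr; split; first exact: (HR j).1.
  by move=> z hz; rewrite ((HR j).2 z hz).
- by move=> j v; rewrite row_tr => hv; rewrite ((HR j).2 v hv) trmxK.
move=> X' hX' eX'.
have E : X' *m U2^T = X *m U2^T.
  apply/matrixP => a i.
  have := sparse_inj hk1 hU1 (sparse_col U2 i hX) (sparse_col U2 i hX').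
  have e : U1 *m col i (X' *m U2^T) = U1 *m col i (X *m U2^T).
    by rewrite -eY -col_mulmx mulmxA eX'.
  move=> /(_ e) /matrixP /(_ a 0).
  by rewrite !mxE.
apply/row_matrixP => j.
have := sparse_inj hk2 hU2 (sparse_row j hX) (sparse_row j hX').
rewrite -!row_tr E => /(_ erefl) /(congr1 trmx).
by rewrite !trmxK.
Qed.
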